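(* Let $\mathbb{F}$ be a field, $p,q\in\mathbb{F}[t]$ monic of degree $2$, and $\mathcal{W}_{p,q}=\mathbb{F}\langle a,b\rangle/(p(a),q(b))$. A nonzero element $x\in\mathcal{W}_{p,q}$ is a zero divisor (i.e. there is $y\neq0$ with $xy=0$ or $yx=0$) if and only if $N(x)=0$, where $N(x)=xx^\star$.
   Context: $\mathcal{W}_{p,q}$ is the free associative unital $\mathbb{F}$-algebra on two generators modulo the ideal generated by $p(a),q(b)$. For a $2$-dimensional algebra set $x^\star=\mathrm{tr}(x)-x$; the adjunction $x\mapsto x^\star$ of $\mathcal{W}_{p,q}$ is the unique $\mathbb{F}$-linear anti-automorphism agreeing with this on $\mathbb{F}[a]$ and $\mathbb{F}[b]$ (so $a^\star=\mathrm{tr}(p)-a$, $b^\star=\mathrm{tr}(q)-b$, where $\mathrm{tr}(p)$ is minus the coefficient of $t$). The norm $N(x)=xx^\star=x^\star x$ lies in the center of $\mathcal{W}_{p,q}$. *)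

(* Defs.v *)
From HB Require Import structures.
From mathcomp Require Import all_boot all_order all_algebra.
Set Implicit Arguments. Unset Strict Implicit. Unset Printing Implicit Defensive.
Import GRing.Theory.
Local Open Scope ring_scope.

Definition trp (F : fieldType) (p : {poly F}) : F := - p`_1.

(* (W, a, b) is the free associative unital F-algebra on a, b modulo the
   two-sided ideal generated by p(a), q(b): it satisfies p(a) = q(b) = 0 and is
   initial (universal) among F-algebras with two such elements. *)
Definition is_W_pq (F : fieldType) (p q : {poly F}) (W : algType F) (a b : W) : Prop :=
  horner_alg a p = 0 /\ horner_alg b q = 0 /\
  forall (B : algType F) (a' b' : B),
    horner_alg a' p = 0 -> horner_alg b' q = 0 ->
    (exists f : {lrmorphism W -> B}, f a = a' /\ f b = b') /\
    (forall f g : {lrmorphism W -> B}, f a = g a -> f b = g b -> f =1 g).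

(* star is the F-linear anti-automorphism of W with x^* = tr(x) - x on F[a], F[b];
   by linearity this amounts to 1^* = 1, a^* = tr(p) - a, b^* = tr(q) - b. *)
Definition is_adjunction (F : fieldType) (p q : {poly F}) (W : algType F) (a b : W)
    (star : {linear W -> W}) : Prop :=
  star 1 = 1 /\ (forall x y, star (x * y) = star y * star x) /\ bijective star /\
  star a = (trp p)%:A - a /\ star b = (trp q)%:A - b.

(* Main.v *)
Require Import Defs.
From HB Require Import structures.
From mathcomp Require Import all_boot all_order all_algebra.
From mathcomp Require Import ring boolp.
Set Implicit Arguments. Unset Strict Implicit. Unset Printing Implicit Defensive.
Import GRing.Theory.
Local Open Scope ring_scope.


Section MK2.
Variable R : comNzRingType.
Definition mk2 (x y z w : R) : 'M[R]_2 :=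
  \matrix_(i, j) if i == 0 then (if j == 0 then x else y) else (if j == 0 then z else w).
Lemma ord2P (i : 'I_2) : i = 0 \/ i = 1.
Proof. by case: i => [[|[|//]]] Hi; [left|right]; apply: val_inj. Qed.
Lemma mk2_eta (M : 'M[R]_2) : M = mk2 (M 0 0) (M 0 1) (M 1 0) (M 1 1).
Proof. by apply/matrixP => i j; rewrite mxE; case: (ord2P i) => ->; case: (ord2P j) => ->. Qed.
Lemma mk2E x y z w : [/\ mk2 x y z w 0 0 = x, mk2 x y z w 0 1 = y, mk2 x y z w 1 0 = z & mk2 x y z w 1 1 = w].
Proof. by rewrite !mxE. Qed.
Lemma mk2_inj x y z w x' y' z' w' : mk2 x y z w = mk2 x' y' z' w' -> [/\ x = x', y = y', z = z' & w = w'].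
Proof.
move=> e; have := congr1 (fun M : 'M_2 => (M 0 0, M 0 1, M 1 0, M 1 1)) e.
by rewrite !mxE /= => [[-> -> -> ->]].
Qed.
Lemma mk2_mul x y z w x' y' z' w' :
  mk2 x y z w *m mk2 x' y' z' w' = mk2 (x * x' + y * z') (x * y' + y * w') (z * x' + w * z') (z * y' + w * w').
Proof.
apply/matrixP => i j; rewrite !mxE !big_ord_recl big_ord0 !mxE /=.
by case: (ord2P i) => ->; case: (ord2P j) => -> /=; rewrite addr0.
Qed.
Lemma mk2_add x y z w x' y' z' w' :
  mk2 x y z w + mk2 x' y' z' w' = mk2 (x + x') (y + y') (z + z') (w + w').
Proof. by apply/matrixP => i j; rewrite !mxE; case: (ord2P i) => ->; case: (ord2P j) => ->. Qed.
Lemma mk2_opp x y z w : - mk2 x y z w = mk2 (- x) (- y) (- z) (- w).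
Proof. by apply/matrixP => i j; rewrite !mxE; case: (ord2P i) => ->; case: (ord2P j) => ->. Qed.
Lemma mk2_scale k x y z w : k *: mk2 x y z w = mk2 (k * x) (k * y) (k * z) (k * w).
Proof. by apply/matrixP => i j; rewrite !mxE; case: (ord2P i) => ->; case: (ord2P j) => ->. Qed.
Lemma mk2_scalar k : k%:M = mk2 k 0 0 k :> 'M[R]_2.
Proof. by apply/matrixP => i j; rewrite !mxE; case: (ord2P i) => ->; case: (ord2P j) => ->. Qed.
Lemma mk2_one : (1 : 'M[R]_2) = mk2 1 0 0 1.
Proof. by rewrite -mk2_scalar. Qed.
Lemma mk2_zero : (0 : 'M[R]_2) = mk2 0 0 0 0.
Proof. by apply/matrixP => i j; rewrite !mxE; case: (ord2P i) => ->; case: (ord2P j) => ->. Qed.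
End MK2.

Section MPdef.
Variable F : fieldType.
Definition MP := 'M[{poly F}]_2.
HB.instance Definition _ := GRing.NzRing.on MP.
Definition mscale (k : F) (M : MP) : MP := (k%:P *: (M : 'M[{poly F}]_2)).
Fact mscaleA k l v : mscale k (mscale l v) = mscale (k * l) v.
Proof. by rewrite /mscale scalerA polyCM. Qed.
Fact mscale1 : left_id 1 mscale.
Proof. by move=> v; rewrite /mscale scale1r. Qed.
Fact mscaleDr : right_distributive mscale +%R.
Proof. by move=> k u v; rewrite /mscale scalerDr. Qed.
Fact mscaleDl v : {morph mscale^~ v: k l / k + l}.
Proof. by move=> k l; rewrite /mscale polyCD scalerDl. Qed.
HB.instance Definition _ := GRing.Zmodule_isLmodule.Build F MP mscaleA mscale1 mscaleDr mscaleDl.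
Fact mscaleAl (k : F) (u v : MP) : k *: (u * v) = (k *: u) * v.
Proof. by rewrite /GRing.scale /= /mscale -!mulmxE scalemxAl. Qed.
HB.instance Definition _ := GRing.Lmodule_isLalgebra.Build F MP mscaleAl.
Fact mscaleAr (k : F) (u v : MP) : k *: (u * v) = u * (k *: v).
Proof. by rewrite /GRing.scale /= /mscale -!mulmxE scalemxAr. Qed.
HB.instance Definition _ := GRing.Lalgebra_isAlgebra.Build F MP mscaleAr.
Lemma MP_scale k x y z w : k *: (mk2 x y z w : MP) = mk2 (k%:P * x) (k%:P * y) (k%:P * z) (k%:P * w).
Proof. exact: mk2_scale. Qed.
Lemma MP_mul x y z w x' y' z' w' :
  (mk2 x y z w : MP) * (mk2 x' y' z' w' : MP) = mk2 (x * x' + y * z') (x * y' + y * w') (z * x' + w * z') (z * y' + w * w').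
Proof. by rewrite -mk2_mul. Qed.
End MPdef.
Lemma lrm_horner (F : fieldType) (A B : algType F) (f : {lrmorphism A -> B}) (x : A) (P : {poly F}) :
  f (horner_alg x P) = horner_alg (f x) P.
Proof.
elim/poly_ind: P => [|P c IH]; first by rewrite !rmorph0.
by rewrite !rmorphD !rmorphM /= !horner_algX !horner_algC IH linearZ /= rmorph1.
Qed.

Section Gen.
Variables (F : fieldType) (W : algType F) (P : W -> Prop).
Hypotheses (P1 : P 1) (PD : forall x y, P x -> P y -> P (x + y))
  (PZ : forall k x, P x -> P (k *: x)) (PM : forall x y, P x -> P y -> P (x * y)).
Definition Pb : pred W := fun w => `[< P w >].
Lemma Pb_closed : GRing.subsemialg_closed Pb.
Proof.
split.
- by apply/asboolP.
- split; first by apply/asboolP; rewrite -(scale0r 1); apply: PZ.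
  by move=> x y /asboolP hx /asboolP hy; apply/asboolP; apply: PD.
- by move=> k x /asboolP hx; apply/asboolP; apply: PZ.
- by move=> x y /asboolP hx /asboolP hy; apply/asboolP; apply: PM.
Qed.
Definition subP := {w : W | Pb w}.
HB.instance Definition _ := [isSub of subP for (@sval W Pb)].
HB.instance Definition _ := [Choice of subP by <:].
HB.instance Definition _ := GRing.SubChoice_isSubAlgebra.Build F W Pb subP Pb_closed.

Definition vs : subP -> W := val.
Definition vs2 : subP -> W := vs.
HB.instance Definition _ := GRing.RMorphism.on vs2.
Fact vs2Z : scalable vs2. Proof. by []. Qed.
HB.instance Definition _ := GRing.isScalable.Build F subP W *:%R vs2 vs2Z.
Variables (p q : {poly F}) (a b : W).
Hypotheses (hW : is_W_pq p q a b) (Pa : P a) (Pb' : P b).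

Lemma gen_all w : P w.
Proof.
have Pa' : Pb a by apply/asboolP.
have Pb'' : Pb b by apply/asboolP.
pose a' : subP := exist _ a Pa'.
pose b' : subP := exist _ b Pb''.
have vl : forall (x : subP), val x = 0 -> x = 0.
  by move=> x hx; apply: val_inj; rewrite hx.
case: hW => hpa [hqb] H0; case: (H0 subP a' b').
- by apply: vl; rewrite -[val _]/(vs2 _) lrm_horner.
- by apply: vl; rewrite -[val _]/(vs2 _) lrm_horner.
move=> [f [fa fb]] _.
have [_ /(_ (vs2 \o f) idfun) H] := H0 W a b hpa hqb.
have e : val (f w) = w by apply: H => /=; rewrite ?fa ?fb.
by move: (valP (f w)); rewrite e => /asboolP.
Qed.
End Gen.


Section Lin.
Variables (F : fieldType) (V : lmodType F).
Definition LL (x : nat -> V) (c : nat -> F) := \sum_(i < 8) c i *: x i.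
Lemma LLD x c d : LL x c + LL x d = LL x (fun i => c i + d i).
Proof. by rewrite /LL -big_split; apply: eq_bigr => i _; rewrite scalerDl. Qed.
Lemma LLN x c : - LL x c = LL x (fun i => - c i).
Proof. by rewrite /LL -sumrN; apply: eq_bigr => i _; rewrite scaleNr. Qed.
Lemma LLZ x k c : k *: LL x c = LL x (fun i => k * c i).
Proof. by rewrite /LL scaler_sumr; apply: eq_bigr => i _; rewrite scalerA. Qed.
Lemma LL_ext x c d : (forall i, (i < 8)%N -> c i = d i) -> LL x c = LL x d.
Proof. by move=> h; apply: eq_bigr => i _; rewrite h. Qed.
Definition dl (k : nat) : nat -> F := fun i => if i == k then 1 else 0.
Lemma lin_tr (P : V -> V -> V -> V -> V -> V -> V -> V -> Prop) y0 y1 y2 y3 y4 y5 y6 y7 :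
  let x := nth 0 [:: y0; y1; y2; y3; y4; y5; y6; y7] in
  P (LL x (dl 0)) (LL x (dl 1)) (LL x (dl 2)) (LL x (dl 3))
    (LL x (dl 4)) (LL x (dl 5)) (LL x (dl 6)) (LL x (dl 7)) ->
  P y0 y1 y2 y3 y4 y5 y6 y7.
Proof.
move=> x; suff e : forall k, (k < 8)%N -> LL x (dl k) = x k.
  by rewrite !e.
move=> k hk; rewrite /LL (bigD1 (Ordinal hk)) //= big1.
  by rewrite /dl eqxx scale1r addr0.
move=> i /eqP hi; rewrite /dl; case: eqP => [e|_]; last by rewrite scale0r.
by case: hi; apply: val_inj.
Qed.
End Lin.

Ltac lin_solve y0 y1 y2 y3 y4 y5 y6 y7 :=
  pattern y0, y1, y2, y3, y4, y5, y6, y7;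
  apply: lin_tr; cbv beta;
  rewrite ?(LLD, LLN, LLZ); apply: LL_ext;
  do 8 (case=> [_|]; [rewrite /dl /=; ring|]); by [].



Section Comp.
Variables (F : fieldType) (W : algType F) (a b : W) (t1 n1 t2 n2 : F).
Hypotheses (ha : a * a = t1 *: a - n1 *: 1) (hb : b * b = t2 *: b - n2 *: 1).
Definition cc := a * b + b * a - t2 *: a - t1 *: b.
Lemma ca : a * cc = cc * a.
Proof.
rewrite /cc !(mulrDr, mulrDl, mulrN, mulNr) !mulrA -!scalerAr -!scalerAl.
rewrite -(mulrA b a a) ha !(mulrDr, mulrDl, mulrN, mulNr) -!scalerAl -!scalerAr !mul1r !mulr1.
move: (b * a) (a * b) (a * b * a) => y2 y1 y0.
rewrite -[_%:A]/(_ *: (1 : W)).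
have y7 : W := 0; have y6 : W := 0; have y5 : W := 0.
lin_solve y0 y1 y2 a b (1 : W) y5 y6.
Qed.
Lemma cb : b * cc = cc * b.
Proof.
rewrite /cc !(mulrDr, mulrDl, mulrN, mulNr) !mulrA -!scalerAr -!scalerAl.
rewrite -(mulrA a b b) hb !(mulrDr, mulrDl, mulrN, mulNr) -!scalerAl -!scalerAr !mul1r !mulr1.
move: (b * a) (a * b) (b * a * b) => y2 y1 y0.
rewrite -[_%:A]/(_ *: (1 : W)).
have y7 : W := 0; have y6 : W := 0; have y5 : W := 0.
lin_solve y0 y1 y2 a b (1 : W) y5 y6.
Qed.
Lemma ba_rel : b * a = cc - a * b + t2 *: a + t1 *: b.
Proof.
rewrite /cc.
have y7 : W := 0; have y6 : W := 0; have y5 : W := 0.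
move: (b * a) (a * b) => y2 y1.
lin_solve y1 y2 a b y5 y6 y7 y7.
Qed.
End Comp.

Section Comp2.
Variables (F : fieldType) (W : algType F) (a b : W) (t1 n1 t2 n2 : F).
Variable c : W.
Hypotheses (ha : a * a = t1 *: a - n1 *: 1) (hb : b * b = t2 *: b - n2 *: 1).
Hypotheses (hca : a * c = c * a) (hcb : b * c = c * b) (hba : b * a = c - a * b + t2 *: a + t1 *: b).
Definition hc (P : {poly F}) := horner_alg c P.
Lemma hc_comm x : x * c = c * x -> forall P, hc P * x = x * hc P.
Proof.
move=> hx; elim/poly_ind => [|P k IH]; first by rewrite /hc rmorph0 mul0r mulr0.
have -> : hc (P * 'X + k%:P) = hc P * c + k *: 1.
  by rewrite /hc rmorphD rmorphM /= horner_algX horner_algC.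
by rewrite mulrDl mulrDr -mulrA -hx mulrA IH -mulrA -scalerAl -scalerAr mul1r mulr1.
Qed.
Lemma hcZ k P : hc (k *: P) = k *: hc P.
Proof. by rewrite /hc -mul_polyC rmorphM /= horner_algC mulr_algl. Qed.
Lemma hcD P Q : hc (P + Q) = hc P + hc Q.
Proof. by rewrite /hc rmorphD. Qed.
Lemma hcN P : hc (- P) = - hc P.
Proof. by rewrite /hc rmorphN. Qed.
Definition hh P Q := hc P + hc Q * a.
Lemma L1 P Q : a * hh P Q = hh (- (n1 *: Q)) (P + t1 *: Q).
Proof.
rewrite /hh hcN hcZ hcD hcZ mulrDr mulrA -(hc_comm hca) -(hc_comm hca).
rewrite -mulrA ha mulrDr mulrN -!scalerAr mulr1 mulrDl -scalerAl.
have y7 : W := 0; have y6 : W := 0; have y5 : W := 0; have y4 : W := 0.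
move: (hc Q) (hc P) (hc Q * a) (hc P * a) => y3 y2 y1 y0.
lin_solve y0 y1 y2 y3 y4 y5 y6 y7.
Qed.
Lemma L2 P Q : b * hh P Q = hh ('X * Q) (t2 *: Q) + hh (P + t1 *: Q) (- Q) * b.
Proof.
rewrite /hh hcN hcZ hcD hcZ mulrDr mulrA -(hc_comm hcb) -(hc_comm hcb).
rewrite -mulrA hba mulrC /hc rmorphM /= horner_algX -!/(hc _).
rewrite !(mulrDr, mulrDl, mulrN, mulNr) -!scalerAr -!scalerAl !mulrA.
have y7 : W := 0; have y6 : W := 0.
move: (hc Q * b) (hc P * b) (hc Q * c) (hc Q * a) (hc Q * a * b) => y4 y3 y2 y1 y0.
lin_solve y0 y1 y2 y3 y4 y6 y7 y7.
Qed.
Lemma hhD P Q P' Q' : hh P Q + hh P' Q' = hh (P + P') (Q + Q').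
Proof.
rewrite /hh !hcD mulrDl.
have y7 : W := 0; have y6 : W := 0; have y5 : W := 0; have y4 : W := 0.
move: (hc P) (hc Q * a) (hc P') (hc Q' * a) => y0 y1 y2 y3.
lin_solve y0 y1 y2 y3 y4 y5 y6 y7.
Qed.
Lemma hhZ k P Q : k *: hh P Q = hh (k *: P) (k *: Q).
Proof. by rewrite /hh !hcZ scalerDr scalerAl. Qed.
Definition Hs u := exists P Q, u = hh P Q.
Definition Ss w := exists u v, [/\ Hs u, Hs v & w = u + v * b].
Lemma Hs_add u v : Hs u -> Hs v -> Hs (u + v).
Proof. by move=> [P [Q ->]] [P' [Q' ->]]; exists (P + P'), (Q + Q'); rewrite hhD. Qed.
Lemma Hs_scale k u : Hs u -> Hs (k *: u).
Proof. by move=> [P [Q ->]]; exists (k *: P), (k *: Q); rewrite hhZ. Qed.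
Lemma Ss_add x y : Ss x -> Ss y -> Ss (x + y).
Proof.
move=> [u [v [hu hv ->]]] [u' [v' [hu' hv' ->]]].
exists (u + u'), (v + v'); split; try exact: Hs_add.
rewrite mulrDl; clear hu hv hu' hv'.
have y7 : W := 0; have y6 : W := 0; have y5 : W := 0; have y4 : W := 0.
move: u (v * b) u' (v' * b) => y0 y1 y2 y3.
lin_solve y0 y1 y2 y3 y4 y5 y6 y7.
Qed.
Lemma Ss_scale k x : Ss x -> Ss (k *: x).
Proof.
move=> [u [v [hu hv ->]]]; exists (k *: u), (k *: v); split; try exact: Hs_scale.
by rewrite scalerDr scalerAl.
Qed.
Lemma Ss_a x : Ss x -> Ss (a * x).
Proof.
move=> [u [v [[P [Q ->]] [R [T ->]] ->]]].
exists (a * hh P Q), (a * hh R T); rewrite !L1; split.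
- by exists (- (n1 *: Q)), (P + t1 *: Q).
- by exists (- (n1 *: T)), (R + t1 *: T).
by rewrite mulrDr mulrA !L1.
Qed.
Lemma Ss_b x : Ss x -> Ss (b * x).
Proof.
move=> [u [v [[P [Q ->]] [R [T ->]] ->]]].
set U1 := hh ('X * Q) (t2 *: Q); set V1 := hh (P + t1 *: Q) (- Q).
set U2 := hh ('X * T) (t2 *: T); set V2 := hh (R + t1 *: T) (- T).
have HU1 : Hs U1 by exists ('X * Q), (t2 *: Q).
have HV1 : Hs V1 by exists (P + t1 *: Q), (- Q).
have HU2 : Hs U2 by exists ('X * T), (t2 *: T).
have HV2 : Hs V2 by exists (R + t1 *: T), (- T).
exists (U1 + (- n2) *: V2), (V1 + U2 + t2 *: V2); split.
- by apply: Hs_add => //; apply: Hs_scale.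
- by apply: Hs_add; [apply: Hs_add|apply: Hs_scale].
rewrite mulrDr mulrA !L2 -/U1 -/V1 -/U2 -/V2.
clear HU1 HV1 HU2 HV2; clearbody U1 V1 U2 V2.
rewrite [(U2 + _) * b]mulrDl -mulrA hb.
rewrite !(mulrDr, mulrDl, mulrN, mulNr) -!scalerAr -!scalerAl mulr1.
have y7 : W := 0; have y6 : W := 0; have y5 : W := 0.
move: (V2) (V1 * b) (U2 * b) (V2 * b) (U1) => y4 y1 y2 y3 y0.
lin_solve y0 y1 y2 y3 y4 y5 y6 y7.
Qed.
Lemma Ss_one : Ss 1.
Proof.
exists 1, 0; split; last by rewrite mul0r addr0.
- by exists 1, 0; rewrite /hh /hc rmorph1 rmorph0 mul0r addr0.
- by exists 0, 0; rewrite /hh /hc rmorph0 mul0r addr0.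
Qed.
End Comp2.


Section Mat.
Variable F : fieldType.
Implicit Types (M N : MP F).
Lemma MP_one : (1 : MP F) = mk2 1 0 0 1.
Proof. exact: mk2_one. Qed.
Lemma MP_zero : (0 : MP F) = mk2 0 0 0 0.
Proof. exact: mk2_zero. Qed.
Lemma MP_add x y z w x' y' z' w' :
  (mk2 x y z w : MP F) + mk2 x' y' z' w' = mk2 (x + x') (y + y') (z + z') (w + w').
Proof. exact: mk2_add. Qed.
Lemma MP_opp x y z w : - (mk2 x y z w : MP F) = mk2 (- x) (- y) (- z) (- w).
Proof. exact: mk2_opp. Qed.
Definition adj2 M : MP F := mk2 (M 1 1) (- M 0 1) (- M 1 0) (M 0 0).
Definition det2 M := M 0 0 * M 1 1 - M 0 1 * M 1 0.
Lemma adj2_mk x y z w : adj2 (mk2 x y z w) = mk2 w (- y) (- z) x.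
Proof. by rewrite /adj2 !mxE. Qed.
Lemma det2_mk x y z w : det2 (mk2 x y z w) = x * w - y * z.
Proof. by rewrite /det2 !mxE. Qed.
Lemma mul_adj2 M : M * adj2 M = mk2 (det2 M) 0 0 (det2 M).
Proof. by rewrite (mk2_eta M) adj2_mk det2_mk MP_mul; congr mk2; ring. Qed.
Lemma adj2_mul M : adj2 M * M = mk2 (det2 M) 0 0 (det2 M).
Proof. by rewrite (mk2_eta M) adj2_mk det2_mk MP_mul; congr mk2; ring. Qed.
Lemma adj2D M N : adj2 (M + N) = adj2 M + adj2 N.
Proof. by rewrite (mk2_eta M) (mk2_eta N) MP_add !adj2_mk MP_add; congr mk2; ring. Qed.
Lemma adj2Z k M : adj2 (k *: M) = k *: adj2 M.
Proof. by rewrite (mk2_eta M) MP_scale !adj2_mk MP_scale; congr mk2; ring. Qed.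
Lemma adj2M M N : adj2 (M * N) = adj2 N * adj2 M.
Proof. by rewrite (mk2_eta M) (mk2_eta N) MP_mul !adj2_mk MP_mul; congr mk2; ring. Qed.
Lemma adj2_1 : adj2 1 = 1.
Proof. by rewrite MP_one adj2_mk oppr0. Qed.
End Mat.

Section Polys.
Variable F : fieldType.
Definition mon2 (c1 c0 : F) : {poly F} := 'X * ('X + c1%:P) + c0%:P.
Lemma size_mon2_prod (c1 : F) : size ('X * ('X + c1%:P)) = 3%N.
Proof.
rewrite size_mul ?polyX_eq0 ?size_polyX ?size_XaddC //.
by apply: monic_neq0; apply: monicXaddC.
Qed.
Lemma mon2_monic c1 c0 : mon2 c1 c0 \is monic.
Proof.
apply/monicP; rewrite /mon2 lead_coefDl; last first.
  by rewrite size_mon2_prod (leq_ltn_trans (size_polyC_leq1 _)).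
by apply/monicP; rewrite monicMl ?monicX // monicXaddC.
Qed.
Lemma size_mon2 c1 c0 : size (mon2 c1 c0) = 3%N.
Proof.
by rewrite /mon2 size_addl size_mon2_prod // (leq_ltn_trans (size_polyC_leq1 _)).
Qed.
Lemma size_quad (k2 k1 k0 : F) : leq (size (k2%:P * 'X^2 + k1%:P * 'X + k0%:P)) 3.
Proof.
apply: (leq_trans (size_add _ _)); rewrite geq_max; apply/andP; split; last first.
  exact: (leq_trans (size_polyC_leq1 _)).
apply: (leq_trans (size_add _ _)); rewrite geq_max; apply/andP; split.
  apply: (leq_trans (size_mul_leq _ _)); rewrite size_polyXn.
  by move: (size_polyC_leq1 k2); case: (size _) => [|[|]].
apply: (leq_trans (size_mul_leq _ _)); rewrite size_polyX.
by move: (size_polyC_leq1 k1); case: (size _) => [|[|]].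
Qed.
Lemma monic_plus_small (m1 m2 r : {poly F}) : m1 \is monic -> m2 \is monic ->
  size m1 = 3%N -> size m2 = 3%N -> (size r <= 3)%N -> m1 * m2 + r != 0.
Proof.
move=> h1 h2 s1 s2 sr; apply: monic_neq0; apply/monicP.
have sM : size (m1 * m2) = 5%N.
  by rewrite size_mul ?s1 ?s2 // monic_neq0.
rewrite lead_coefDl; last by rewrite sM (leq_ltn_trans sr).
by apply/monicP; rewrite monicMl.
Qed.
End Polys.

Section Det.
Variable F : fieldType.
Lemma scal_zero_l (d : {poly F}) (Y : MP F) : (mk2 d 0 0 d : MP F) * Y = 0 -> Y != 0 -> d = 0.
Proof.
rewrite {1}(mk2_eta Y) MP_mul MP_zero => /mk2_inj [].
rewrite !mul0r !addr0 !add0r => e1 e2 e3 e4 hY.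
case: (eqVneq d 0) => // hd; case/eqP: hY.
move: e1 e2 e3 e4.
move=> /eqP; rewrite mulf_eq0 (negbTE hd) /= => /eqP h1.
move=> /eqP; rewrite mulf_eq0 (negbTE hd) /= => /eqP h2.
move=> /eqP; rewrite mulf_eq0 (negbTE hd) /= => /eqP h3.
move=> /eqP; rewrite mulf_eq0 (negbTE hd) /= => /eqP h4.
by rewrite {1}(mk2_eta Y) h1 h2 h3 h4.
Qed.
Lemma scal_zero_r (d : {poly F}) (Y : MP F) : Y * (mk2 d 0 0 d : MP F) = 0 -> Y != 0 -> d = 0.
Proof.
move=> h hY; apply: (scal_zero_l _ hY); rewrite -h (mk2_eta Y) !MP_mul; congr mk2; ring.
Qed.
End Det.


Lemma p_expand (F : fieldType) (p : {poly F}) : p \is monic -> size p = 3%N ->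
  p = 'X^2 + p`_1 *: 'X + (p`_0)%:P.
Proof.
move=> /monicP hm hs; apply/polyP => i.
rewrite coefD coefD coefXn coefZ coefX coefC.
case: i => [|[|[|i]]] /=; rewrite ?mulr1 ?mulr0 ?add0r ?addr0 //.
  by move: hm; rewrite /lead_coef hs.
by rewrite nth_default // hs.
Qed.

Section Rel.
Variables (F : fieldType) (p : {poly F}) (W : algType F) (a : W).
Hypotheses (hp : p \is monic) (hp2 : size p = 3%N) (hpa : horner_alg a p = 0).
Lemma sq_rel : a * a = trp p *: a - p`_0 *: 1.
Proof.
move: hpa; rewrite {1}(p_expand hp hp2) !rmorphD linearZ /= rmorphXn /= horner_algX horner_algC.
move/eqP; rewrite -!addrA addr_eq0 => /eqP; rewrite -expr2 => ->.
by rewrite /trp scaleNr opprD -mul_polyC rmorphM /= horner_algC horner_algX mulr_algl scalerN.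
Qed.
End Rel.


Lemma horner3 (F : fieldType) (p : {poly F}) (A : algType F) (x : A) :
  p \is monic -> size p = 3%N -> horner_alg x p = x * x - trp p *: x + p`_0 *: 1.
Proof.
move=> hp hp2; rewrite {1}(p_expand hp hp2) !rmorphD /= rmorphXn /= horner_algX horner_algC.
by rewrite -mul_polyC rmorphM /= horner_algC horner_algX mulr_algl /trp scaleNr opprK expr2.
Qed.

Lemma horner_scal (F : fieldType) (g : {poly F}) (P : {poly F}) :
  horner_alg (mk2 g 0 0 g : MP F) P = mk2 (P \Po g) 0 0 (P \Po g).
Proof.
elim/poly_ind: P => [|P k IH].
  by rewrite rmorph0 comp_poly0 MP_zero.
have -> : horner_alg (mk2 g 0 0 g : MP F) (P * 'X + k%:P) =
   horner_alg (mk2 g 0 0 g : MP F) P * mk2 g 0 0 g + k *: 1.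
  by rewrite rmorphD rmorphM /= horner_algX horner_algC.
rewrite IH MP_mul MP_one MP_scale MP_add comp_polyD comp_polyM comp_polyX comp_polyC.
by congr mk2; ring.
Qed.

Section Main.
Variables (F : fieldType) (p q : {poly F}).
Hypotheses (hp : p \is monic) (hp2 : size p = 3%N) (hq : q \is monic) (hq2 : size q = 3%N).
Variables (W : algType F) (a b : W).
Hypothesis hW : is_W_pq p q a b.
Local Notation t1 := (trp p).
Local Notation n1 := (p`_0).
Local Notation t2 := (trp q).
Local Notation n2 := (q`_0).
Let hpa : horner_alg a p = 0. Proof. by case: hW. Qed.
Let hqb : horner_alg b q = 0. Proof. by case: hW => _ []. Qed.
Let ha : a * a = t1 *: a - n1 *: 1. Proof. exact: sq_rel. Qed.
Let hb : b * b = t2 *: b - n2 *: 1. Proof. exact: sq_rel. Qed.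
Local Notation c := (cc a b t1 t2).
Let hca : a * c = c * a. Proof. exact: ca ha. Qed.
Let hcb : b * c = c * b. Proof. exact: cb hb. Qed.
Let hba : b * a = c - a * b + t2 *: a + t1 *: b. Proof. exact: ba_rel. Qed.

Lemma span w : Ss a b c w.
Proof.
pose P0 w := forall s, Ss a b c s -> Ss a b c (w * s).
suff : P0 w by move/(_ 1 (Ss_one a b c)); rewrite mulr1.
apply: (gen_all (P := P0) _ _ _ _ hW).
- by move=> s hs; rewrite mul1r.
- by move=> x y hx hy s hs; rewrite mulrDl; apply: Ss_add; [apply: hx|apply: hy].
- by move=> k x hx s hs; rewrite -scalerAl; apply: Ss_scale; apply: hx.
- by move=> x y hx hy s hs; rewrite -mulrA; apply: hx; apply: hy.
- by move=> s hs; apply: (Ss_a ha hca).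
- by move=> s hs; apply: (Ss_b hb hcb hba).
Qed.

Definition wq : {poly F} := 'X * (t2%:P - 'X) - n2%:P.
Definition Am : MP F := mk2 0 (- n1%:P) 1 t1%:P.
Definition Bm : MP F := mk2 'X wq 1 (t2%:P - 'X).
Definition gam : {poly F} := wq - n1%:P - t1%:P * 'X.
Lemma hAm : horner_alg Am p = 0.
Proof.
rewrite horner3 // /Am MP_one MP_mul !MP_scale MP_opp !MP_add MP_zero.
by congr mk2; rewrite /trp; ring.
Qed.
Lemma hBm : horner_alg Bm q = 0.
Proof.
rewrite horner3 // /Bm /wq MP_one MP_mul !MP_scale MP_opp !MP_add MP_zero.
by congr mk2; rewrite /trp; ring.
Qed.
Lemma size_gam : size gam = 3%N.
Proof.
have -> : gam = - mon2 (t1 - t2) (n1 + n2).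
  by rewrite /gam /wq /mon2 !polyCD !polyCN; ring.
by rewrite size_opp size_mon2.
Qed.

Variable f : {lrmorphism W -> MP F}.
Hypotheses (fa : f a = Am) (fb : f b = Bm).
Lemma fZ k x : f (k *: x) = k *: f x.
Proof. exact: linearZ_LR. Qed.
Lemma fc : f c = mk2 gam 0 0 gam.
Proof.
have -> : f c = f a * f b + f b * f a - t2 *: f a - t1 *: f b.
  rewrite /cc !raddfB raddfD.
  by congr (_ + _ - _ - _); [exact: rmorphM | exact: rmorphM | exact: fZ | exact: fZ].
rewrite fa fb /Am /Bm /gam /wq !MP_mul !MP_scale !MP_opp !MP_add.
by congr mk2; ring.
Qed.
Lemma fhc P : f (hc c P) = mk2 (P \Po gam) 0 0 (P \Po gam).
Proof. by rewrite /hc lrm_horner fc horner_scal. Qed.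
Lemma fD x y : f (x + y) = f x + f y. Proof. exact: raddfD. Qed.
Lemma fM x y : f (x * y) = f x * f y. Proof. exact: rmorphM. Qed.

Definition ee : {poly F} := 'X + 'X + t1%:P - t2%:P.
Definition nw : {poly F} := n1%:P + wq.
Definition DD := nw * (nw - t1%:P * ee) + n1%:P * ee * ee.
Lemma DD_neq0 : DD != 0.
Proof.
have -> : DD = mon2 (- t2) (n2 - n1) * mon2 (t1 + t1 - t2) (n2 - n1 + t1 * t1 - t1 * t2)
   + ((n1 * 4%:R)%:P * 'X^2 + (n1 * 4%:R * (t1 - t2))%:P * 'X + (n1 * (t1 - t2) ^+ 2)%:P).
  rewrite /DD /nw /ee /wq /mon2; ring.
apply: monic_plus_small; rewrite ?mon2_monic ?size_mon2 //.
exact: size_quad.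
Qed.

Lemma finj w : f w = 0 -> w = 0.
Proof.
move=> hw; have [u [v [[P [Q eu]] [R [T ev]] ew]]] := span w.
subst w u v; move: hw.
rewrite /hh !(fD, fM) fb !fhc fa /Am /Bm !(MP_mul, MP_add).
set z0 := P \Po gam; set z1 := Q \Po gam; set z2 := R \Po gam; set z3 := T \Po gam.
set M := mk2 _ _ _ _ => hw.
have hM : forall i j, M i j = 0 by move=> i j; rewrite hw MP_zero; case: (ord2P i) => ->; case: (ord2P j) => ->; rewrite !mxE.
have m00 : M 0 0 = z0 + 'X * z2 - n1%:P * z3 by rewrite /M !mxE /=; ring.
have m01 : M 0 1 = - n1%:P * z1 + wq * z2 - n1%:P * (t2%:P - 'X) * z3 by rewrite /M !mxE /=; ring.
have m10 : M 1 0 = z1 + z2 + ('X + t1%:P) * z3 by rewrite /M !mxE /=; ring.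
have m11 : M 1 1 = z0 + t1%:P * z1 + (t2%:P - 'X) * z2 + (wq + t1%:P * (t2%:P - 'X)) * z3.
  by rewrite /M !mxE /=; ring.
have hz2 : DD * z2 = (nw - t1%:P * ee) * (M 0 1 + n1%:P * M 1 0)
    - n1%:P * ee * (M 1 1 - M 0 0 - t1%:P * M 1 0).
  by rewrite m00 m01 m10 m11 /DD /nw /ee; ring.
have hz3 : DD * z3 = nw * (M 1 1 - M 0 0 - t1%:P * M 1 0) + ee * (M 0 1 + n1%:P * M 1 0).
  by rewrite m00 m01 m10 m11 /DD /nw /ee; ring.
rewrite !hM !(mulr0, addr0, subrr, subr0, sub0r, oppr0, add0r) in hz2 hz3.
have z20 : z2 = 0.
  by move/eqP: hz2; rewrite mulf_eq0 (negbTE DD_neq0) /= => /eqP.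
have z30 : z3 = 0.
  by move/eqP: hz3; rewrite mulf_eq0 (negbTE DD_neq0) /= => /eqP.
have z10 : z1 = 0.
  by have := m10; rewrite hM z20 z30 => ->; ring.
have z00 : z0 = 0.
  by have := m00; rewrite hM z20 z30 => ->; ring.
have cz : forall X : {poly F}, X \Po gam = 0 -> X = 0.
  by move=> X /eqP; rewrite comp_poly_eq0 ?size_gam // => /eqP.
rewrite (cz _ z00) (cz _ z10) (cz _ z20) (cz _ z30) /hc rmorph0.
by rewrite !(mul0r, add0r).
Qed.
Lemma f1 : f 1 = 1. Proof. exact: rmorph1. Qed.
Lemma f0 : f 0 = 0. Proof. exact: raddf0. Qed.
Lemma fB x y : f (x - y) = f x - f y. Proof. exact: raddfB. Qed.

Variable star : {linear W -> W}.
Hypothesis hstar : is_adjunction p q a b star.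
Lemma sD x y : star (x + y) = star x + star y. Proof. exact: raddfD. Qed.
Lemma sZ k x : star (k *: x) = k *: star x. Proof. exact: linearZ. Qed.

Lemma fstar w : f (star w) = adj2 (f w).
Proof.
case: hstar => s1 [sM [_ [sa sb]]].
apply: (gen_all (P := fun w => f (star w) = adj2 (f w)) _ _ _ _ hW).
- by rewrite s1 f1 adj2_1.
- by move=> x y hx hy; rewrite sD !fD hx hy adj2D.
- by move=> k x hx; rewrite sZ !fZ hx adj2Z.
- by move=> x y hx hy; rewrite sM !fM hx hy adj2M.
- rewrite sa fB fZ f1 fa /Am MP_one MP_scale MP_opp MP_add adj2_mk.
  by congr mk2; ring.
- rewrite sb fB fZ f1 fb /Bm MP_one MP_scale MP_opp MP_add adj2_mk.
  by congr mk2; ring.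
Qed.

Lemma main_dir (x : W) :
  (exists y, y != 0 /\ (x * y = 0 \/ y * x = 0)) -> x * star x = 0.
Proof.
move=> [y [hy hxy]].
have fy : f y != 0.
  by apply/negP => /eqP /finj e; move/eqP: hy; apply.
have hd : det2 (f x) = 0.
  case: hxy => e.
  - apply: (scal_zero_l _ fy).
    by rewrite -adj2_mul -mulrA -fM e f0 mulr0.
  - apply: (scal_zero_r _ fy).
    by rewrite -mul_adj2 mulrA -fM e f0 mul0r.
by apply: finj; rewrite fM fstar mul_adj2 hd MP_zero.
Qed.
End Main.

Unset Implicit Arguments.
Theorem mainTheorem16 (F : fieldType) (p q : {poly F})
  (hp : p \is monic) (hp2 : size p = 3%N) (hq : q \is monic) (hq2 : size q = 3%N)
  (W : algType F) (a b : W) (hW : is_W_pq p q a b)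
  (star : {linear W -> W}) (hstar : is_adjunction p q a b star)
  (x : W) (hx : x != 0) :
  (exists y : W, y != 0 /\ (x * y = 0 \/ y * x = 0)) <-> x * star x = 0.
Proof.
have [hpa [hqb hU]] := hW.
have [[f [fa fb]] _] := hU (MP F) (Am p) (Bm q) (hAm hp hp2) (hBm hq hq2).
split; first exact: (main_dir hp hp2 hq hq2 hW fa fb hstar).
move=> h; exists (star x); split; last by left.
case: hstar => _ [_ [[g gK _] _]].
apply: contra hx => /eqP e; apply/eqP.
by rewrite -(gK x) e -{1}(raddf0 star) gK.
Qed.
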